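(* For integers $n,m$ and $y=(y_1,y_2,y_3)\in Q$, \[\sum_{r=y_1}^n\sum_{s=y_1+y_2}^m\mathcal{K}_{n,m;r,s}(z,w;q)\Phi_{r,s;y}(1,1;z,w;q)=z^{y_1}w^{y_1+y_2}q^{\frac12(y_1^2+y_2^2+y_3^2)}\Phi_{n,m;y}(1,1;z,w;q)\] and \[\sum_{r=y_1}^n\sum_{s=y_1+y_2}^m\mathcal{K}_{n,m;r,s}(z/q,w;q)\Phi_{r,s;y}(u,v;z,w;q)=z^{y_1}w^{y_1+y_2}q^{\frac12(y_1^2+y_2^2+y_3^2)-y_1}\Phi_{n,m;y}(uzq^{y_{12}},vwq^{y_{23}};z,w;q).\]
   Context: $Q=\{y\in\mathbb{Z}^3:y_1+y_2+y_3=0\}$, $y_{ij}:=y_i-y_j$. For $n\in\mathbb{Z}$, $(a;q)_n=(a;q)_\infty/(aq^n;q)_\infty$ ($1/(q;q)_n=0$ for $n<0$), $(a_1,\dots,a_k;q)_n=\prod_i(a_i;q)_n$. $\mathcal{K}_{n,m;r,s}(z,w;q):=\frac{z^rw^sq^{r^2-rs+s^2}}{(q;q)_{n-r}(q;q)_{m-s}}$. $\Phi_{n,m}(z,w;q):=\frac{(zwq;q)_{n+m}}{(q,zq,zwq;q)_n(q,wq,zwq;q)_m}$; $\Phi_{n,m}(u,v;z,w;q):=\Phi_{n,m}(z/q,w;q)-\frac{uz}{(z;q)_2}\Phi_{n-1,m}(zq,w/q;q)+\frac{uvzw^2}{(w,zw;q)_2}\Phi_{n-1,m-1}(z,wq;q)$;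 and \[\Phi_{n,m;y}(u,v;z,w;q):=\frac{\Phi_{n-y_1,m-y_1-y_2}(u,v;zq^{y_{12}},wq^{y_{23}};q)}{(zq;q)_{y_{12}}(wq;q)_{y_{23}}(zwq;q)_{y_{13}}}.\] *)

(* Defs.v *)
(* All quantities live in an arbitrary field R; the paper's
   identities are identities of rational functions in z, w, q (polynomial in
   u, v); we state them pointwise under genericity hypotheses. *)
From HB Require Import structures.
From mathcomp Require Import all_boot all_order all_algebra.
Set Implicit Arguments. Unset Strict Implicit. Unset Printing Implicit Defensive.
Import Order.TTheory GRing.Theory Num.Theory.
Local Open Scope ring_scope.

Section Defs.
Variable R : fieldType.

Definition qpochn (a q : R) (k : nat) : R := \prod_(i < k) (1 - a * q ^+ i).

(* (a;q)_n for n : int, i.e. (a;q)_oo/(aq^n;q)_oo :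
   for n = -(k+1) < 0 it equals 1/(aq^n;q)_(k+1) *)
Definition qpoch (a q : R) (n : int) : R :=
  match n with
  | Posz k => qpochn a q k
  | Negz k => (qpochn (a * q ^ n) q k.+1)^-1
  end.

Definition invqfac (q : R) (n : int) : R :=
  match n with
  | Posz k => (qpochn q q k)^-1
  | Negz _ => 0
  end.

Definition Phi0 (z w q : R) (n m : int) : R :=
  qpoch (z * w * q) q (n + m) * invqfac q n * invqfac q m
  / (qpoch (z * q) q n * qpoch (z * w * q) q n
     * qpoch (w * q) q m * qpoch (z * w * q) q m).

Definition Phi2 (u v z w q : R) (n m : int) : R :=
  Phi0 (z / q) w q n m
  - u * z / qpoch z q 2 * Phi0 (z * q) (w / q) q (n - 1) m
  + u * v * z * w ^+ 2 / (qpoch w q 2 * qpoch (z * w) q 2)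
    * Phi0 z (w * q) q (n - 1) (m - 1).

Definition Phiy (u v z w q : R) (y1 y2 y3 : int) (n m : int) : R :=
  Phi2 u v (z * q ^ (y1 - y2)) (w * q ^ (y2 - y3)) q (n - y1) (m - y1 - y2)
  / (qpoch (z * q) q (y1 - y2) * qpoch (w * q) q (y2 - y3)
     * qpoch (z * w * q) q (y1 - y3)).

Definition Kker (n m r s : int) (z w q : R) : R :=
  z ^ r * w ^ s * q ^ (r ^+ 2 - r * s + s ^+ 2)
  * invqfac q (n - r) * invqfac q (m - s).

Definition zsum (a b : int) (F : int -> R) : R :=
  if a <= b then \sum_(i < (absz (b - a)).+1) F (a + (i : nat)%:Z) else 0.

End Defs.

(* Main.v *)
Require Import Defs.
From HB Require Import structures.
From mathcomp Require Import all_boot all_order all_algebra.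
From mathcomp Require Import ring zify.
Set Implicit Arguments. Unset Strict Implicit. Unset Printing Implicit Defensive.
Import Order.TTheory GRing.Theory Num.Theory.
Local Open Scope ring_scope.


Definition gen (R : fieldType) (q c : R) := forall k : nat, c * q ^+ k != 1.

Lemma qS (R : fieldType) (c q : R) k :
  qpochn c q k.+1 = qpochn c q k * (1 - c * q ^+ k).
Proof. by rewrite /qpochn big_ord_recr. Qed.

Lemma qSl (R : fieldType) (c q : R) k :
  qpochn c q k.+1 = (1 - c) * qpochn (c * q) q k.
Proof.
rewrite /qpochn big_ord_recl expr0 mulr1; congr (_ * _).
by apply: eq_bigr => i _; rewrite exprS mulrA.
Qed.

Lemma q0 (R : fieldType) (c q : R) : qpochn c q 0 = 1.
Proof. by rewrite /qpochn big_ord0. Qed.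

Lemma qpoch_neq0 (R : fieldType) (q c : R) k : gen q c -> qpochn c q k != 0.
Proof.
move=> g; elim: k => [|k IH]; first by rewrite q0 oner_neq0.
by rewrite qS mulf_neq0 // subr_eq0 eq_sym.
Qed.

Lemma gen_mulq (R : fieldType) (q c : R) : gen q c -> gen q (c * q).
Proof. by move=> g k; rewrite -mulrA -exprS. Qed.

Lemma qadd (R : fieldType) (c q : R) m n :
  qpochn c q (m + n) = qpochn c q m * qpochn (c * q ^+ m) q n.
Proof.
elim: n => [|n IH]; first by rewrite addn0 q0 mulr1.
by rewrite addnS !qS IH -mulrA -mulrA exprD mulrA.
Qed.

Definition qb (R : fieldType) (q : R) (n k : nat) : R :=
  if (k <= n)%N then qpochn q q n / (qpochn q q k * qpochn q q (n - k)) else 0.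

Lemma qb_gt (R : fieldType) (q : R) n k : (n < k)%N -> qb q n k = 0.
Proof. by rewrite /qb ltnNge => /negbTE ->. Qed.

Lemma qb_n0 (R : fieldType) (q : R) n : gen q q -> qb q n 0 = 1.
Proof.
move=> g; rewrite /qb leq0n subn0 q0 mul1r divff //; exact: qpoch_neq0.
Qed.

Lemma qb_nn (R : fieldType) (q : R) n : gen q q -> qb q n n = 1.
Proof.
move=> g; rewrite /qb leqnn subnn q0 mulr1 divff //; exact: qpoch_neq0.
Qed.

Lemma qb_pascal1 (R : fieldType) (q : R) n k : gen q q ->
  qb q n.+1 k.+1 = qb q n k + q ^+ k.+1 * qb q n k.+1.
Proof.
move=> g; have nz := qpoch_neq0 _ g.
case: (ltngtP k n) => [lt|gt|->]; last first.
- by rewrite !qb_nn // qb_gt // mulr0 addr0.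
- by rewrite !qb_gt ?mulr0 ?addr0 // ltnS ltnW.
have [d ->] : exists d, n = (k + d.+1)%N by exists (n - k).-1; lia.
rewrite /qb !ifT; try lia.
have -> : ((k + d.+1).+1 - k.+1 = d.+1)%N by lia.
have -> : (k + d.+1 - k = d.+1)%N by lia.
have -> : (k + d.+1 - k.+1 = d)%N by lia.
rewrite (qS q q (k + d.+1)) (qS q q k) (qS q q d).
have -> : q * q ^+ (k + d.+1) = (q * q ^+ k) * (q * q ^+ d).
  by rewrite -!exprS -exprD addSn addnS.
have hA : 1 - q * q ^+ k != 0 by rewrite subr_eq0 eq_sym; apply: g.
have hB : 1 - q * q ^+ d != 0 by rewrite subr_eq0 eq_sym; apply: g.
rewrite exprS.
field; rewrite ?nz ?hA ?hB //=.
Qed.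

Lemma qb_pascal2 (R : fieldType) (q : R) n k : gen q q ->
  qb q n.+1 k.+1 = q ^+ (n - k) * qb q n k + qb q n k.+1.
Proof.
move=> g; have nz := qpoch_neq0 _ g.
case: (ltngtP k n) => [lt|gt|->]; last first.
- by rewrite !qb_nn // qb_gt // subnn expr0 mul1r addr0.
- by rewrite !qb_gt ?mulr0 ?addr0 // ltnS ltnW.
have [d ->] : exists d, n = (k + d.+1)%N by exists (n - k).-1; lia.
rewrite /qb !ifT; try lia.
have -> : ((k + d.+1).+1 - k.+1 = d.+1)%N by lia.
have -> : (k + d.+1 - k = d.+1)%N by lia.
have -> : (k + d.+1 - k.+1 = d)%N by lia.
rewrite (qS q q (k + d.+1)) (qS q q k) (qS q q d).
have -> : q * q ^+ (k + d.+1) = (q * q ^+ k) * (q * q ^+ d).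
  by rewrite -!exprS -exprD addSn addnS.
have hA : 1 - q * q ^+ k != 0 by rewrite subr_eq0 eq_sym; apply: g.
have hB : 1 - q * q ^+ d != 0 by rewrite subr_eq0 eq_sym; apply: g.
rewrite exprS.
field; rewrite ?nz ?hA ?hB //=.
Qed.

Lemma qb_mulS (R : fieldType) (q : R) i k : gen q q ->
  qb q i.+1 k.+1 * qpochn q q k.+1 = (1 - q ^+ i.+1) * (qb q i k * qpochn q q k).
Proof.
move=> g; have nz := qpoch_neq0 _ g.
case: (leqP k i) => h; last by rewrite !qb_gt ?mul0r ?mulr0.
rewrite /qb !ifT //; have -> : (i.+1 - k.+1 = i - k)%N by lia.
rewrite (qS q q i) exprS; field; rewrite ?nz //=.
Qed.

Lemma qb_trin (R : fieldType) (q : R) a i k : gen q q -> (k <= i)%N ->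
  qb q a i * qb q i k = qb q a k * qb q (a - k) (i - k).
Proof.
move=> g ki; have nz := qpoch_neq0 _ g.
case: (leqP i a) => ia; last first.
  by rewrite (qb_gt _ ia) mul0r; case: (leqP k a) => ka;
   [rewrite (@qb_gt _ _ (a - k) (i - k)) ?mulr0 //; lia | rewrite qb_gt ?mul0r].
rewrite /qb !ifT; try lia.
have -> : (a - k - (i - k) = a - i)%N by lia.
field; rewrite ?nz //=.
Qed.

Lemma qSS (R : fieldType) (c q : R) n : 1 - c != 0 ->
  qpochn (c * q) q n = qpochn c q n * (1 - c * q ^+ n) / (1 - c).
Proof. by move=> h; rewrite -qS qSl mulrAC divff // mul1r. Qed.

Lemma I1 (R : fieldType) (q : R) n : gen q q -> forall al, gen q (al * q) ->
  \sum_(i < n.+1) qb q n i * al ^+ i * q ^+ (i * i) / qpochn (al * q) q i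
  = (qpochn (al * q) q n)^-1.
Proof.
move=> gq; elim: n => [|n IH] al ga.
  by rewrite big_ord1 /= qb_n0 // !q0 muln0 !expr0 !mul1r invr1.
have nz c : gen q c -> forall k, qpochn c q k != 0 by move=> h k; exact: qpoch_neq0.
have h1 : 1 - al * q != 0 by rewrite subr_eq0 eq_sym; move: (ga 0%N); rewrite expr0 mulr1.
rewrite big_ord_recl /=.
under eq_bigr => i _ do rewrite /bump /= add1n qb_pascal2 // mulrDl mulrDl mulrDl.
rewrite big_split /= addrA addrAC.
have -> : qb q n.+1 0 * al ^+ 0 * q ^+ (0 * 0) / qpochn (al * q) q 0 +
  \sum_(i < n.+1) qb q n i.+1 * al ^+ i.+1 * q ^+ (i.+1 * i.+1) / qpochn (al * q) q i.+1
  = (qpochn (al * q) q n)^-1.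
  pose F i := qb q n i * al ^+ i * q ^+ (i * i) / qpochn (al * q) q i.
  have E : \sum_(i < n.+2) F i = \sum_(i < n.+1) F i.
    by rewrite big_ord_recr /= /F qb_gt // !mul0r addr0.
  rewrite -IH // -E [RHS]big_ord_recl /= /F !qb_n0 //.
have -> : \sum_(i < n.+1) q ^+ (n - i) * qb q n i * al ^+ i.+1 * q ^+ (i.+1 * i.+1) /
      qpochn (al * q) q i.+1
  = al * q ^+ n.+1 / (1 - al * q) * \sum_(i < n.+1) qb q n i * (al * q) ^+ i * q ^+ (i * i)
      / qpochn (al * q * q) q i.
  rewrite mulr_sumr; apply: eq_bigr => i _.
  have hi := ltn_ord i.
  have -> : q ^+ (n - i) * qb q n i * al ^+ i.+1 * q ^+ (i.+1 * i.+1) =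
     qb q n i * (al ^+ i.+1 * (q ^+ n.+1 * q ^+ i * q ^+ (i * i))).
    rewrite -!exprD; have -> : (n.+1 + i + i * i = n - i + i.+1 * i.+1)%N by nia.
    by rewrite exprD; ring.
  rewrite qSl exprMn exprS.
  field; rewrite h1 nz //; exact: gen_mulq.
rewrite IH; last exact: gen_mulq.
rewrite (qSS _ _ h1) (qS (al * q)).
have h2 : 1 - al * q * q ^+ n != 0 by rewrite subr_eq0 eq_sym; apply: ga.
rewrite exprS; field; rewrite h1 h2 nz //.
Qed.

Lemma gen_shift (R : fieldType) (q c : R) m : gen q c -> gen q (c * q ^+ m).
Proof. by move=> g k; rewrite -mulrA -exprD. Qed.

Lemma I1k (R : fieldType) (q x : R) a k : gen q q -> gen q (x * q) ->
  \sum_(i < a.+1) qb q a i * qb q i k * x ^+ i * q ^+ (k * (i - k) + (i - k) * (i - k))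
      / qpochn (x * q) q i
  = qb q a k * x ^+ k / qpochn (x * q) q a.
Proof.
move=> gq gx; have nz c : gen q c -> forall j, qpochn c q j != 0.
  by move=> h j; exact: qpoch_neq0.
case: (leqP k a) => ka; last first.
  rewrite (qb_gt _ ka) !mul0r big1 // => i _.
  by rewrite (@qb_gt _ _ i k) ?mulr0 ?mul0r //; move: (ltn_ord i); lia.
rewrite -(big_mkord xpredT (fun i => qb q a i * qb q i k * x ^+ i *
   q ^+ (k * (i - k) + (i - k) * (i - k)) / qpochn (x * q) q i)).
rewrite (@big_cat_nat _ _ _ k 0 a.+1) /=; [|lia|lia].
rewrite big1_seq ?add0r; last first.
  by move=> i; rewrite mem_index_iota => /andP[_ hi]; rewrite (@qb_gt _ _ i k) // mulr0 !mul0r.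
rewrite -{1}(add0n k) big_addn big_mkord.
have ak : (a.+1 - k = (a - k).+1)%N by lia.
rewrite ak.
have E : forall i : 'I_(a - k).+1,
   qb q a (i + k) * qb q (i + k) k * x ^+ (i + k) *
   q ^+ (k * (i + k - k) + (i + k - k) * (i + k - k)) / qpochn (x * q) q (i + k)
   = qb q a k * x ^+ k / qpochn (x * q) q k *
     (qb q (a - k) i * (x * q ^+ k) ^+ i * q ^+ (i * i) / qpochn (x * q ^+ k * q) q i).
  move=> i; rewrite qb_trin //; last by lia.
  have -> : (i + k - k = i)%N by lia.
  rewrite addnC qadd exprD exprMn exprD.
  have -> : x * q ^+ k * q = x * q * q ^+ k by rewrite mulrAC.
  rewrite exprM; field; rewrite !nz //; exact: gen_shift.
rewrite (eq_bigr _ (fun i _ => E i)).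
rewrite -mulr_sumr I1 //; last by rewrite mulrAC; exact: gen_shift.
have -> : x * q ^+ k * q = x * q * q ^+ k by rewrite mulrAC.
have -> : qpochn (x * q) q a = qpochn (x * q) q k * qpochn (x * q * q ^+ k) q (a - k).
  by rewrite -qadd subnKC.
field; rewrite !nz //; exact: gen_shift.
Qed.

Definition qbm (R : fieldType) (q : R) (j k : nat) : R :=
  if k is k'.+1 then qb q j k' else 0.

Lemma qb_pascal1' (R : fieldType) (q : R) j k : gen q q ->
  qb q j.+1 k = qbm q j k + q ^+ k * qb q j k.
Proof.
move=> g; case: k => [|k] /=; first by rewrite !qb_n0 // add0r expr0 mul1r.
exact: qb_pascal1.
Qed.

Lemma I2 (R : fieldType) (q : R) j : gen q q -> forall i C, gen q C ->
  qpochn (C * q ^+ i) q j / qpochn C q j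
  = \sum_(k < i.+1) qb q i k * qb q j k * qpochn q q k * q ^+ ((i - k) * (j - k))
      / qpochn C q k.
Proof.
move=> gq; have nz c : gen q c -> forall j, qpochn c q j != 0.
  by move=> h j'; exact: qpoch_neq0.
elim: j => [|j IH] i C gC.
  rewrite !q0 divr1 big_ord_recl /= big1 ?addr0; last first.
    by move=> k _; rewrite (@qb_gt _ _ 0 (bump 0 k)) // mulr0 !mul0r.
  by rewrite !qb_n0 // !q0 muln0 expr0 invr1 !mulr1.
case: i => [|i].
  by rewrite big_ord1 /= expr0 mulr1 divff ?nz // !qb_n0 // !q0 invr1 !mulr1.
under eq_bigr => k _ do rewrite (@qb_pascal1' _ q j) // mulrDr mulrDl mulrDl mulrDl.
rewrite big_split /=.
have hC : 1 - C != 0 by rewrite subr_eq0 eq_sym; move: (gC 0%N); rewrite expr0 mulr1.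
have -> : \sum_(k < i.+2) qb q i.+1 k * qbm q j k * qpochn q q k *
      q ^+ ((i.+1 - k) * (j.+1 - k)) / qpochn C q k
  = (1 - q ^+ i.+1) / (1 - C) * (qpochn (C * q * q ^+ i) q j / qpochn (C * q) q j).
  rewrite IH; last exact: gen_mulq.
  rewrite big_ord_recl /= mulr0 !mul0r add0r mulr_sumr; apply: eq_bigr => k _.
  rewrite /bump /= add1n.
  have -> : ((i.+1 - k.+1) * (j.+1 - k.+1) = (i - k) * (j - k))%N by rewrite !subSS.
  rewrite qSl.
  have -> : qb q i.+1 k.+1 * qb q j k * ((1 - q) * qpochn (q * q) q k) =
     qb q i.+1 k.+1 * qpochn q q k.+1 * qb q j k by rewrite qSl; ring.
  rewrite qb_mulS // (qSl C) exprS; field; rewrite hC nz //; exact: gen_mulq.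
have -> : \sum_(k < i.+2) qb q i.+1 k * (q ^+ k * qb q j k) * qpochn q q k *
      q ^+ ((i.+1 - k) * (j.+1 - k)) / qpochn C q k
  = q ^+ i.+1 * (qpochn (C * q ^+ i.+1) q j / qpochn C q j).
  rewrite IH // mulr_sumr; apply: eq_bigr => k _.
  have hk := ltn_ord k.
  case: (leqP k j) => kj; last first.
    by rewrite (@qb_gt _ _ j k) // !mulr0 !mul0r mulr0.
  have e1 : ((i.+1 - k) * (j.+1 - k) = (i.+1 - k) + (i.+1 - k) * (j - k))%N by nia.
  have e2 : q ^+ i.+1 = q ^+ k * q ^+ (i.+1 - k) by rewrite -exprD subnKC.
  rewrite e1 exprD e2; ring.
rewrite (qS C) (qS (C * q ^+ i.+1)) (qSS _ _ hC).
have -> : C * q * q ^+ i = C * q ^+ i.+1 by rewrite exprS mulrA.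
have h2 : 1 - C * q ^+ j != 0 by rewrite subr_eq0 eq_sym; apply: gC.
rewrite exprS; field; rewrite hC h2 !nz //; exact: gen_mulq.
Qed.

Definition qbm2 (R : fieldType) (q : R) (j k : nat) : R :=
  if k is k'.+1 then q ^+ (j - k') * qb q j k' else 0.

Lemma qb_pascal2' (R : fieldType) (q : R) j k : gen q q ->
  qb q j.+1 k = qbm2 q j k + qb q j k.
Proof.
move=> g; case: k => [|k] /=; first by rewrite !qb_n0 // add0r.
exact: qb_pascal2.
Qed.

Lemma I3 (R : fieldType) (q : R) b : gen q q -> forall a c, gen q (c * q) ->
  \sum_(k < a.+1) qb q a k * qb q b k * qpochn q q k * c ^+ k * q ^+ (k * k)
      / qpochn (c * q) q k
  = qpochn (c * q ^+ a.+1) q b / qpochn (c * q) q b.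
Proof.
move=> gq; have nz c : gen q c -> forall j, qpochn c q j != 0.
  by move=> h j'; exact: qpoch_neq0.
elim: b => [|b IH] a c gc.
  rewrite !q0 divr1 big_ord_recl /= big1 ?addr0; last first.
    by move=> k _; rewrite (@qb_gt _ _ 0 (bump 0 k)) // mulr0 !mul0r.
  by rewrite !qb_n0 // !q0 muln0 !expr0 invr1 !mulr1.
case: a => [|a].
  by rewrite big_ord1 /= !qb_n0 // !q0 !expr0 expr1 divff ?nz // invr1 !mulr1.
under eq_bigr => k _ do rewrite (@qb_pascal2' _ q b) // mulrDr mulrDl mulrDl mulrDl mulrDl.
rewrite big_split /= IH //.
have hc : 1 - c * q != 0 by rewrite subr_eq0 eq_sym; move: (gc 0%N); rewrite expr0 mulr1.
have -> : \sum_(k < a.+2) qb q a.+1 k * qbm2 q b k * qpochn q q k * c ^+ k * q ^+ (k * k)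
      / qpochn (c * q) q k
  = (1 - q ^+ a.+1) * c * q ^+ b.+1 / (1 - c * q) *
     (qpochn (c * q * q ^+ a.+1) q b / qpochn (c * q * q) q b).
  rewrite -IH; last exact: gen_mulq.
  rewrite big_ord_recl /= mulr0 !mul0r add0r mulr_sumr; apply: eq_bigr => k _.
  rewrite /bump /= add1n.
  case: (leqP k b) => kb; last first.
    by rewrite (@qb_gt _ _ b k) // !mulr0 !mul0r !mulr0.
  have e1 : q ^+ (b - k) * q ^+ (k.+1 * k.+1) = q ^+ b.+1 * q ^+ k * q ^+ (k * k).
    rewrite -!exprD; congr (_ ^+ _); nia.
  rewrite (qSl (c * q)).
  have -> : qb q a.+1 k.+1 * (q ^+ (b - k) * qb q b k) * qpochn q q k.+1 * c ^+ k.+1 *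
      q ^+ (k.+1 * k.+1) = (qb q a.+1 k.+1 * qpochn q q k.+1) * qb q b k * c ^+ k.+1 *
      (q ^+ (b - k) * q ^+ (k.+1 * k.+1)) by ring.
  rewrite qb_mulS // e1 exprMn !exprS; field; rewrite hc nz //; exact: gen_mulq.
rewrite (qS (c * q)) (qS (c * q ^+ a.+2)).
have -> : c * q * q ^+ a.+1 = c * q ^+ a.+2 by rewrite -mulrA -exprS.
have -> : qpochn (c * q * q) q b = qpochn (c * q) q b * (1 - c * q * q ^+ b) / (1 - c * q).
  exact: qSS.
have h2 : 1 - c * q * q ^+ b != 0 by rewrite subr_eq0 eq_sym; apply: gc.
have -> : c * q ^+ a.+2 * q ^+ b = c * q * q ^+ b * q ^+ a.+1.
  by rewrite !exprS; ring.
rewrite !exprS; field; rewrite hc h2 !nz //; exact: gen_mulq.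
Qed.

Lemma sum_pad (R : fieldType) (f : nat -> R) i a : (i <= a)%N ->
  (forall k, (i < k)%N -> f k = 0) ->
  \sum_(k < i.+1) f k = \sum_(k < a.+1) f k.
Proof.
move=> ia hf; rewrite -!(big_mkord xpredT f).
rewrite [in RHS](@big_cat_nat _ _ _ i.+1 0 a.+1) //= [X in _ = _ + X]big1_seq ?addr0 //.
by move=> k /andP[_]; rewrite mem_index_iota => /andP[h _]; apply: hf.
Qed.

Lemma coreT (R : fieldType) (q x y : R) a b :
  gen q q -> gen q (x * q) -> gen q (y * q) -> gen q (x * y * q) ->
  \sum_(i < a.+1) \sum_(j < b.+1) qb q a i * qb q b j * x ^+ i * y ^+ j *
     q ^+ (i * i + j * j - i * j) * qpochn (x * y * q * q ^+ i) q j
     / (qpochn (x * y * q) q j * qpochn (x * q) q i * qpochn (y * q) q j)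
  = qpochn (x * y * q * q ^+ a) q b
     / (qpochn (x * y * q) q b * qpochn (x * q) q a * qpochn (y * q) q b).
Proof.
move=> gq gx gy gc; have nz c : gen q c -> forall j, qpochn c q j != 0.
  by move=> h j'; exact: qpoch_neq0.
set C := x * y * q.
pose g (i j k : nat) := qb q a i * qb q b j * x ^+ i * y ^+ j *
     q ^+ (i * i + j * j - i * j + (i - k) * (j - k)) / (qpochn (x * q) q i * qpochn (y * q) q j) *
     (qb q i k * qb q j k * qpochn q q k / qpochn C q k).
have step1 : forall (i : 'I_a.+1) (j : 'I_b.+1),
   qb q a i * qb q b j * x ^+ i * y ^+ j *
     q ^+ (i * i + j * j - i * j) * qpochn (C * q ^+ i) q j
     / (qpochn C q j * qpochn (x * q) q i * qpochn (y * q) q j)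
   = \sum_(k < a.+1) g i j k.
  move=> i j; rewrite -(@sum_pad _ (g i j) i a); last 2 first.
  - by rewrite -ltnS.
  - by move=> k ik; rewrite /g (@qb_gt _ _ i k) // !mul0r mulr0.
  transitivity (\sum_(k < i.+1) qb q a i * qb q b j * x ^+ i * y ^+ j *
     q ^+ (i * i + j * j - i * j) / (qpochn (x * q) q i * qpochn (y * q) q j) *
     (qb q i k * qb q j k * qpochn q q k * q ^+ ((i - k) * (j - k)) / qpochn C q k)).
    by rewrite -mulr_sumr -I2 //; field; rewrite !nz.
  by apply: eq_bigr => k _; rewrite /g exprD; ring.
rewrite (eq_bigr _ (fun i _ => eq_bigr _ (fun j _ => step1 i j))).
under eq_bigr => i _ do rewrite exchange_big.
rewrite exchange_big /=.
have step2 : forall k : 'I_a.+1,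
  \sum_(i < a.+1) \sum_(j < b.+1) g i j k =
  qpochn q q k / qpochn C q k * q ^+ (k * k) *
  ((\sum_(i < a.+1) qb q a i * qb q i k * x ^+ i * q ^+ (k * (i - k) + (i - k) * (i - k))
      / qpochn (x * q) q i) *
   (\sum_(j < b.+1) qb q b j * qb q j k * y ^+ j * q ^+ (k * (j - k) + (j - k) * (j - k))
      / qpochn (y * q) q j)).
  move=> k; rewrite big_distrl mulr_sumr; apply: eq_bigr => i _.
  rewrite big_distrr mulr_sumr; apply: eq_bigr => j _.
  rewrite /g.
  case: (leqP k i) => ki; last by rewrite (@qb_gt _ _ i k) //=; rewrite !(mulr0, mul0r).
  case: (leqP k j) => kj; last by rewrite (@qb_gt _ _ j k) //=; rewrite !(mulr0, mul0r).
  have -> : (i * i + j * j - i * j + (i - k) * (j - k) =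
     k * k + (k * (i - k) + (i - k) * (i - k)) + (k * (j - k) + (j - k) * (j - k)))%N.
    move: ki kj => /subnK <- /subnK <-; rewrite !addnK; nia.
  rewrite !exprD /=; field; rewrite !nz //.
rewrite (eq_bigr _ (fun k _ => step2 k)).
under eq_bigr => k _ do rewrite I1k // I1k //.
have e : C * q ^+ a = (x * y) * q ^+ a.+1 by rewrite /C exprS !mulrA.
rewrite e.
rewrite [RHS](_ : _ = (qpochn (x * y * q ^+ a.+1) q b / qpochn (x * y * q) q b) /
   (qpochn (x * q) q a * qpochn (y * q) q b)); last by rewrite /C; field; rewrite !nz.
rewrite -(I3 _ gq) // mulr_suml; apply: eq_bigr => k _.
rewrite exprMn /C; field; rewrite !nz //.
Qed.

Lemma zsum_nat (R : fieldType) (a : nat) (f : int -> R) :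
  zsum 0 a f = \sum_(i < a.+1) f i.
Proof. by rewrite /zsum le0z_nat subr0 absz_nat; apply: eq_bigr => i _; rewrite add0r. Qed.

Lemma zsum_neg (R : fieldType) (a : int) (f : int -> R) : a < 0 -> zsum 0 a f = 0.
Proof. by move=> h; rewrite /zsum leNgt h. Qed.

Lemma zsum0 (R : fieldType) (a b : int) : zsum a b (fun _ => 0 : R) = 0.
Proof. by rewrite /zsum; case: ifP => // _; rewrite big1. Qed.

Lemma expE (i j : nat) : (i%:Z) ^+ 2 - i%:Z * j%:Z + (j%:Z) ^+ 2 = (i * i + j * j - i * j)%N.
Proof.
have h : (i * j <= i * i + j * j)%N by nia.
rewrite -subzn // PoszD !PoszM; ring.
Qed.

Lemma coreZ (R : fieldType) (q x y : R) (a b : int) :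
  gen q q -> gen q (x * q) -> gen q (y * q) -> gen q (x * y * q) ->
  zsum 0 a (fun i => zsum 0 b (fun j => Kker a b i j x y q * Phi0 x y q i j))
  = Phi0 x y q a b.
Proof.
move=> gq gx gy gc; have nz c : gen q c -> forall j, qpochn c q j != 0.
  by move=> h j'; exact: qpoch_neq0.
case: a => [a|a]; last first.
  by rewrite zsum_neg // /Phi0 /= mulr0 !mul0r.
case: b => [b|b]; last first.
  rewrite zsum_nat big1; last by move=> i _; rewrite zsum_neg.
  by rewrite /Phi0 /= !mulr0 !mul0r.
rewrite zsum_nat.
under eq_bigr => i _ do rewrite zsum_nat.
have E : forall (i : 'I_a.+1) (j : 'I_b.+1),
  Kker a b i j x y q * Phi0 x y q i j =
  (qb q a i * qb q b j * x ^+ i * y ^+ j *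
     q ^+ (i * i + j * j - i * j) * qpochn (x * y * q * q ^+ i) q j
     / (qpochn (x * y * q) q j * qpochn (x * q) q i * qpochn (y * q) q j))
  / (qpochn q q a * qpochn q q b).
  move=> i j; have hi : (i <= a)%N by rewrite -ltnS.
  have hj : (j <= b)%N by rewrite -ltnS.
  rewrite /Kker /Phi0 expE /= -!exprnP subzn // subzn // /= /qb !ifT // qadd.
  field; rewrite !nz //.
rewrite (eq_bigr _ (fun i _ => eq_bigr _ (fun j _ => E i j))).
under eq_bigr => i _ do rewrite -mulr_suml.
rewrite -mulr_suml coreT // /Phi0 /= qadd; field; rewrite !nz //.
Qed.


Lemma Phi0_negl (R : fieldType) (x y q : R) a b : a < 0 -> Phi0 x y q a b = 0.
Proof. by case: a => // a _; rewrite /Phi0 /= mulr0 !mul0r. Qed.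
Lemma Phi0_negr (R : fieldType) (x y q : R) a b : b < 0 -> Phi0 x y q a b = 0.
Proof. by case: b => // b _; rewrite /Phi0 /= !mulr0 !mul0r. Qed.

Lemma contig_gen (R : fieldType) (x y q : R) (a b : nat) :
  q != 0 -> gen q q -> gen q x -> gen q y -> gen q (x * y) ->
  Phi2 1 1 x y q a.+1 b.+1 = Phi0 x y q a.+1 b.+1.
Proof.
move=> q0 gq gx gy gxy.
have nz c : gen q c -> forall j, qpochn c q j != 0.
  by move=> h j'; exact: qpoch_neq0.
have e1 : (a.+1%:Z - 1 = a) by rewrite -addn1 PoszD addrK.
have e2 : (b.+1%:Z - 1 = b) by rewrite -addn1 PoszD addrK.
rewrite /Phi2 e1 e2 /Phi0 /=.
have n1 : x / q * y * q = x * y by field.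
have n2 : x / q * q = x by field.
have n3 : x * q * (y / q) * q = x * y * q by field.
have n4 : y / q * q = y by field.
have n5 : x * (y * q) * q = x * y * q * q by ring.
rewrite n1 n2 n3 n4 n5 !addSn !addnS.
have q2 c : qpochn c q (1 + 1) = (1 - c) * (1 - c * q).
  by rewrite /qpochn !big_ord_recr big_ord0 /= expr0 expr1 mulr1 mul1r.
rewrite !q2.
set C := x * y * q.
rewrite (qSl (x * y) q (a + b).+1) -/C (qS C q (a + b).+1) (qS C q (a + b)).
rewrite (@qSS _ C q (a + b)); last first.
  by rewrite subr_eq0 eq_sym /C; move: (gxy 1%N); rewrite expr1.
have s0 c k : gen q c -> 1 - c * q ^+ k != 0.
  by move=> h; rewrite subr_eq0 eq_sym; apply: h.
have s1 c : gen q c -> 1 - c != 0.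
  by move=> h; move: (s0 c 0%N h); rewrite expr0 mulr1.
have gxq : gen q (x * q) by apply: gen_mulq.
have gyq : gen q (y * q) by apply: gen_mulq.
have gC : gen q C by apply: gen_mulq.
have gCq : gen q (C * q) by apply: gen_mulq.
rewrite (qS q q a) (qS q q b) (qSl x q a) (qSl (x * y) q a) (qSl (x * y) q b) -/C.
rewrite (qS (y * q) q b) (@qSS _ (x * q) q a) ?s1 // (qSl y q b) (qS C q b) (qS C q a).
rewrite (@qSS _ C q a) ?s1 // (@qSS _ C q b) ?s1 // (@qSS _ (y * q) q b) ?s1 //.
rewrite (qS (x * q) q a) (exprS q (a + b)) !exprD /C.
field.
by rewrite !s0 ?s1 ?nz.
Qed.

Lemma contig (R : fieldType) (x y q : R) (a b : int) :
  q != 0 -> gen q q -> gen q x -> gen q y -> gen q (x * y) ->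
  Phi2 1 1 x y q a b = Phi0 x y q a b.
Proof.
move=> hq gq gx gy gxy.
have nz c : gen q c -> forall j, qpochn c q j != 0.
  by move=> h j'; exact: qpoch_neq0.
have s0 c k : gen q c -> 1 - c * q ^+ k != 0.
  by move=> h; rewrite subr_eq0 eq_sym; apply: h.
have s1 c : gen q c -> 1 - c != 0.
  by move=> h; move: (s0 c 0%N h); rewrite expr0 mulr1.
have gxq : gen q (x * q) by apply: gen_mulq.
have gyq : gen q (y * q) by apply: gen_mulq.
have gC : gen q (x * y * q) by apply: gen_mulq.
have n1 : x / q * y * q = x * y by field.
have n2 : x / q * q = x by field.
have n3 : x * q * (y / q) * q = x * y * q by field.
have n4 : y / q * q = y by field.
have q2 c : qpochn c q (1 + 1) = (1 - c) * (1 - c * q).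
  by rewrite /qpochn !big_ord_recr big_ord0 /= expr0 expr1 mulr1 mul1r.
case: (ltP a 0) => ha.
  by rewrite /Phi2 !Phi0_negl ?mulr0 ?subrr ?addr0 //; lia.
case: (ltP b 0) => hb.
  by rewrite /Phi2 !Phi0_negr ?mulr0 ?subrr ?addr0 //; lia.
case: a ha => // a _; case: b hb => // b _.
case: a => [|a].
  rewrite /Phi2 (@Phi0_negl _ _ _ _ (0 - 1)) // (@Phi0_negl _ _ _ _ (0 - 1)) //.
  rewrite !mulr0 subr0 addr0 /Phi0 /= n1 n2 !q0 add0n.
  field; by rewrite !nz ?oner_neq0.
case: b => [|b]; last exact: contig_gen.
have e1 : (a.+1%:Z - 1 = a) by rewrite -addn1 PoszD addrK.
rewrite /Phi2 (@Phi0_negr _ _ _ _ _ (0 - 1)) // mulr0 addr0 e1 /Phi0 /= n1 n2 n3 n4.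
rewrite !addn0 !q0 !q2 (qS q q a) (qSl x q a) (qSl (x * y) q a) (qS (x * y * q) q a).
rewrite (@qSS _ (x * q) q a) ?s1 // (qS (x * q) q a).
field; by rewrite !s0 ?s1 ?nz ?oner_neq0.
Qed.


Lemma Kmain (R : fieldType) (x w q : R) (n m y1 y2 y3 i j : int) :
  y1 + y2 + y3 = 0 -> x != 0 -> w != 0 -> q != 0 ->
  Kker n m (y1 + i) (y1 + y2 + j) x w q =
  x ^ y1 * w ^ (y1 + y2) * q ^ (y1 ^+ 2 + y1 * y2 + y2 ^+ 2) *
  Kker (n - y1) (m - y1 - y2) i j (x * q ^ (y1 - y2)) (w * q ^ (y2 - y3)) q.
Proof.
move=> hQ hx hw hq.
have -> : y3 = - y1 - y2 by lia.
rewrite /Kker !expfzMl !exprz_exp (expfzDr _ _ hx) (expfzDr (y1 + y2) _ hw).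
have -> : n - (y1 + i) = n - y1 - i by ring.
have -> : m - (y1 + y2 + j) = m - y1 - y2 - j by ring.
have H : q ^ ((y1 + i) ^+ 2 - (y1 + i) * (y1 + y2 + j) + (y1 + y2 + j) ^+ 2) =
  q ^ (y1 ^+ 2 + y1 * y2 + y2 ^+ 2) * (q ^ ((y1 - y2) * i) * q ^ ((y2 - (- y1 - y2)) * j)
   * q ^ (i ^+ 2 - i * j + j ^+ 2)).
  by rewrite -!expfzDr //; congr (_ ^ _); ring.
transitivity (x ^ y1 * x ^ i * w ^ (y1 + y2) * w ^ j * invqfac q (n - y1 - i) *
   invqfac q (m - y1 - y2 - j) *
   q ^ ((y1 + i) ^+ 2 - (y1 + i) * (y1 + y2 + j) + (y1 + y2 + j) ^+ 2)); first ring.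
rewrite H; ring.
Qed.

Lemma powdiv (R : fieldType) (x q : R) (n : int) : (x / q) ^ n = x ^ n * q ^ (- n).
Proof. by rewrite expfzMl exprz_inv. Qed.

Lemma KS1 (R : fieldType) (x y q : R) (a b i j : int) :
  x != 0 -> y != 0 -> q != 0 ->
  Kker a b (i + 1) j (x / q) y q = x * Kker (a - 1) b i j (x * q) (y / q) q.
Proof.
move=> hx hy hq.
rewrite /Kker !powdiv !expfzMl (expfzDr i 1 hx) expr1z.
have -> : a - (i + 1) = a - 1 - i by ring.
have H : q ^ (- (i + 1)) * q ^ ((i + 1) ^+ 2 - (i + 1) * j + j ^+ 2) =
   q ^ i * q ^ (- j) * q ^ (i ^+ 2 - i * j + j ^+ 2).
  by rewrite -!expfzDr //; congr (_ ^ _); ring.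
transitivity (x * x ^ i * y ^ j * invqfac q (a - 1 - i) * invqfac q (b - j) *
  (q ^ (- (i + 1)) * q ^ ((i + 1) ^+ 2 - (i + 1) * j + j ^+ 2))); first ring.
rewrite H; ring.
Qed.

Lemma KS2 (R : fieldType) (x y q : R) (a b i j : int) :
  x != 0 -> y != 0 -> q != 0 ->
  Kker a b (i + 1) (j + 1) (x / q) y q = x * y * Kker (a - 1) (b - 1) i j x (y * q) q.
Proof.
move=> hx hy hq.
rewrite /Kker !powdiv !expfzMl (expfzDr i 1 hx) (expfzDr j 1 hy) !expr1z.
have -> : a - (i + 1) = a - 1 - i by ring.
have -> : b - (j + 1) = b - 1 - j by ring.
have H : q ^ (- (i + 1)) * q ^ ((i + 1) ^+ 2 - (i + 1) * (j + 1) + (j + 1) ^+ 2) =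
   q ^ j * q ^ (i ^+ 2 - i * j + j ^+ 2).
  by rewrite -!expfzDr //; congr (_ ^ _); ring.
transitivity (x * x ^ i * (y * y ^ j) * invqfac q (a - 1 - i) * invqfac q (b - 1 - j) *
  (q ^ (- (i + 1)) * q ^ ((i + 1) ^+ 2 - (i + 1) * (j + 1) + (j + 1) ^+ 2))); first ring.
rewrite H; ring.
Qed.

Lemma zsum_shift (R : fieldType) (c d : int) (f : int -> R) :
  zsum c d f = zsum 0 (d - c) (fun i => f (c + i)).
Proof.
rewrite /zsum subr_ge0 subr0; case: ifP => // _.
Qed.

Lemma zsum_S (R : fieldType) (a : int) (f : int -> R) : f 0 = 0 ->
  zsum 0 a f = zsum 0 (a - 1) (fun i => f (i + 1)).
Proof.
move=> f0; case: a => [a|a]; last by rewrite !zsum_neg //; lia.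
case: a => [|a].
  by rewrite zsum_nat big_ord1 f0 zsum_neg.
have -> : (a.+1%:Z - 1 = a) by rewrite -addn1 PoszD addrK.
rewrite !zsum_nat big_ord_recl f0 add0r; apply: eq_bigr => i _.
congr f; by rewrite lift0 -addn1 PoszD.
Qed.

Lemma zsum_add (R : fieldType) (a b : int) (f g : int -> R) :
  zsum a b (fun i => f i + g i) = zsum a b f + zsum a b g.
Proof. by rewrite /zsum; case: ifP; rewrite ?addr0 // big_split. Qed.

Lemma zsum_mull (R : fieldType) (a b : int) (c : R) (f : int -> R) :
  zsum a b (fun i => c * f i) = c * zsum a b f.
Proof. by rewrite /zsum; case: ifP; rewrite ?mulr0 // mulr_sumr. Qed.

Lemma zsum_ext (R : fieldType) (a b : int) (f g : int -> R) :
  (forall i, f i = g i) -> zsum a b f = zsum a b g.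
Proof. by move=> h; rewrite /zsum; case: ifP => // _; apply: eq_bigr. Qed.


Lemma gen_of (R : fieldType) (q c : R) : q != 0 ->
  (forall k : int, c * q ^ k != 1) -> forall k : int, gen q (c * q ^ k).
Proof. by move=> hq h k j; rewrite -mulrA exprnP -expfzDr. Qed.

Lemma mulqp (R : fieldType) (q c : R) (k : int) : q != 0 -> c * q ^ k * q = c * q ^ (k + 1).
Proof. by move=> hq; rewrite expfzDr // expr1z mulrA. Qed.

Lemma divqp (R : fieldType) (q c : R) (k : int) : q != 0 -> c * q ^ k / q = c * q ^ (k - 1).
Proof. by move=> hq; rewrite expfzDr // exprN1 mulrA. Qed.

Lemma gen_q (R : fieldType) (q : R) : (forall k : nat, (0 < k)%N -> q ^+ k != 1) -> gen q q.
Proof. by move=> h k; rewrite -exprS; apply: h. Qed.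

Lemma mulpp (R : fieldType) (q c d : R) (k l : int) : q != 0 ->
  c * q ^ k * (d * q ^ l) = c * d * q ^ (k + l).
Proof. by move=> hq; rewrite expfzDr //; ring. Qed.

Lemma dsum_lin (R : fieldType) (a1 b1 a2 b2 : int) (c al be : R) (F G H : int -> int -> R) :
  zsum a1 b1 (fun i => zsum a2 b2 (fun j => c * (F i j + al * G i j + be * H i j)))
  = c * (zsum a1 b1 (fun i => zsum a2 b2 (F i)) + al * zsum a1 b1 (fun i => zsum a2 b2 (G i))
         + be * zsum a1 b1 (fun i => zsum a2 b2 (H i))).
Proof.
have inner : forall i, zsum a2 b2 (fun j => c * (F i j + al * G i j + be * H i j)) =
   c * (zsum a2 b2 (F i) + al * zsum a2 b2 (G i) + be * zsum a2 b2 (H i)).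
  move=> i; rewrite zsum_mull.
  rewrite (zsum_add _ _ (fun j => F i j + al * G i j) (fun j => be * H i j)).
  rewrite (zsum_add _ _ (fun j => F i j) (fun j => al * G i j)).
  by rewrite !zsum_mull.
rewrite (zsum_ext _ _ inner) zsum_mull.
rewrite (zsum_add _ _ (fun i => zsum a2 b2 (F i) + al * zsum a2 b2 (G i))
                      (fun i => be * zsum a2 b2 (H i))).
rewrite (zsum_add _ _ (fun i => zsum a2 b2 (F i)) (fun i => al * zsum a2 b2 (G i))).
by rewrite !zsum_mull.
Qed.

Lemma S1lem (R : fieldType) (x y q : R) (a b : int) :
  q != 0 -> x != 0 -> y != 0 -> gen q q -> gen q (x * q * q) -> gen q y ->
  gen q (x * y * q) ->
  zsum 0 a (fun i => zsum 0 b (fun j => Kker a b i j (x / q) y q * Phi0 (x * q) (y / q) q (i - 1) j))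
  = x * Phi0 (x * q) (y / q) q (a - 1) b.
Proof.
move=> hq hx hy gq g1 g2 g3.
rewrite zsum_S; last first.
  rewrite (zsum_ext _ _ (g := fun _ => 0)) ?zsum0 // => j.
  by rewrite Phi0_negl ?mulr0.
have E : forall i, zsum 0 b (fun j => Kker a b (i + 1) j (x / q) y q * Phi0 (x * q) (y / q) q (i + 1 - 1) j)
  = x * zsum 0 b (fun j => Kker (a - 1) b i j (x * q) (y / q) q * Phi0 (x * q) (y / q) q i j).
  move=> i; rewrite -zsum_mull; apply: zsum_ext => j.
  by rewrite KS1 // (_ : i + 1 - 1 = i) ?addrK // mulrA.
rewrite (zsum_ext _ _ E) zsum_mull coreZ //.
- by rewrite divfK.
- by rewrite (_ : x * q * (y / q) * q = x * y * q) //; field.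
Qed.

Lemma S2lem (R : fieldType) (x y q : R) (a b : int) :
  q != 0 -> x != 0 -> y != 0 -> gen q q -> gen q (x * q) -> gen q (y * q * q) ->
  gen q (x * y * q * q) ->
  zsum 0 a (fun i => zsum 0 b (fun j => Kker a b i j (x / q) y q * Phi0 x (y * q) q (i - 1) (j - 1)))
  = x * y * Phi0 x (y * q) q (a - 1) (b - 1).
Proof.
move=> hq hx hy gq g1 g2 g3.
rewrite zsum_S; last first.
  rewrite (zsum_ext _ _ (g := fun _ => 0)) ?zsum0 // => j.
  by rewrite Phi0_negl ?mulr0.
have E : forall i, zsum 0 b (fun j => Kker a b (i + 1) j (x / q) y q * Phi0 x (y * q) q (i + 1 - 1) (j - 1))
  = x * y * zsum 0 (b - 1) (fun j => Kker (a - 1) (b - 1) i j x (y * q) q * Phi0 x (y * q) q i j).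
  move=> i; rewrite zsum_S; last by rewrite Phi0_negr ?mulr0.
  rewrite -zsum_mull; apply: zsum_ext => j.
  by rewrite KS2 // !addrK mulrA.
rewrite (zsum_ext _ _ E) zsum_mull coreZ //.
- by rewrite (_ : x * (y * q) * q = x * y * q * q) //; ring.
Qed.

Unset Implicit Arguments.

Theorem corollary4p6 (R : fieldType) (u v z w q : R) (n m y1 y2 y3 : int)
  (hQ : y1 + y2 + y3 = 0)
  (hq0 : q != 0) (hz0 : z != 0) (hw0 : w != 0)
  (hqroot : forall k : nat, (0 < k)%N -> q ^+ k != 1)
  (hzg : forall k : int, z * q ^ k != 1)
  (hwg : forall k : int, w * q ^ k != 1)
  (hzwg : forall k : int, z * w * q ^ k != 1) :
  zsum y1 n (fun r => zsum (y1 + y2) m (fun s =>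
     Kker n m r s z w q * Phiy 1 1 z w q y1 y2 y3 r s))
  = z ^ y1 * w ^ (y1 + y2)
    * q ^ (divz (y1 ^+ 2 + y2 ^+ 2 + y3 ^+ 2) 2)
    * Phiy 1 1 z w q y1 y2 y3 n m
  /\
  zsum y1 n (fun r => zsum (y1 + y2) m (fun s =>
     Kker n m r s (z / q) w q * Phiy u v z w q y1 y2 y3 r s))
  = z ^ y1 * w ^ (y1 + y2)
    * q ^ (divz (y1 ^+ 2 + y2 ^+ 2 + y3 ^+ 2) 2 - y1)
    * Phiy (u * z * q ^ (y1 - y2)) (v * w * q ^ (y2 - y3)) z w q y1 y2 y3 n m.
Proof.
have gq := gen_q hqroot.
have gz := gen_of hq0 hzg.
have gw := gen_of hq0 hwg.
have gzw := gen_of hq0 hzwg.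
have he : divz (y1 ^+ 2 + y2 ^+ 2 + y3 ^+ 2) 2 = y1 ^+ 2 + y1 * y2 + y2 ^+ 2.
  have -> : y3 = - y1 - y2 by lia.
  by rewrite (_ : _ + _ = (y1 ^+ 2 + y1 * y2 + y2 ^+ 2) * 2) ?mulzK //; ring.
rewrite he.
set Z := z * q ^ (y1 - y2).
set W := w * q ^ (y2 - y3).
set D := qpoch (z * q) q (y1 - y2) * qpoch (w * q) q (y2 - y3) * qpoch (z * w * q) q (y1 - y3).
have hZ : Z != 0 by rewrite mulf_neq0 // expfz_neq0.
have hW : W != 0 by rewrite mulf_neq0 // expfz_neq0.
have gZ : gen q Z by apply: gz.
have gW : gen q W by apply: gw.
have gZq : gen q (Z * q) by rewrite /Z mulqp //; apply: gz.
have gWq : gen q (W * q) by rewrite /W mulqp //; apply: gw.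
have gZqq : gen q (Z * q * q) by rewrite /Z !mulqp //; apply: gz.
have gWqq : gen q (W * q * q) by rewrite /W !mulqp //; apply: gw.
have gZW : gen q (Z * W) by rewrite /Z /W mulpp //; apply: gzw.
have gZWq : gen q (Z * W * q) by rewrite /Z /W mulpp // mulqp //; apply: gzw.
have gZWqq : gen q (Z * W * q * q) by rewrite /Z /W mulpp // !mulqp //; apply: gzw.
have eb : m - (y1 + y2) = m - y1 - y2 by rewrite opprD addrA.
have ei : forall i, y1 + i - y1 = i by move=> i; ring.
have ej : forall j, y1 + y2 + j - y1 - y2 = j by move=> j; ring.
split.
- rewrite zsum_shift.
  have E : forall i, zsum (y1 + y2) m (fun s => Kker n m (y1 + i) s z w q *
       Phiy 1 1 z w q y1 y2 y3 (y1 + i) s) =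
     (z ^ y1 * w ^ (y1 + y2) * q ^ (y1 ^+ 2 + y1 * y2 + y2 ^+ 2) / D) *
     zsum 0 (m - y1 - y2) (fun j => Kker (n - y1) (m - y1 - y2) i j Z W q * Phi0 Z W q i j).
    move=> i; rewrite zsum_shift eb -zsum_mull; apply: zsum_ext => j.
    rewrite (@Kmain _ z w q n m y1 y2 y3 i j hQ) // /Phiy -/Z -/W -/D ei ej contig //; ring.
  rewrite (zsum_ext _ _ E) zsum_mull coreZ //.
  by rewrite /Phiy -/Z -/W -/D contig //; ring.
- rewrite zsum_shift.
  have hZq : z / q * q ^ (y1 - y2) = Z / q by rewrite /Z mulrAC.
  set c2 := (z / q) ^ y1 * w ^ (y1 + y2) * q ^ (y1 ^+ 2 + y1 * y2 + y2 ^+ 2) / D.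
  set al := - (u * Z / qpoch Z q 2).
  set be := u * v * Z * W ^+ 2 / (qpoch W q 2 * qpoch (Z * W) q 2).
  have E : forall i, zsum (y1 + y2) m (fun s => Kker n m (y1 + i) s (z / q) w q *
       Phiy u v z w q y1 y2 y3 (y1 + i) s) =
     zsum 0 (m - y1 - y2) (fun j => c2 *
       (Kker (n - y1) (m - y1 - y2) i j (Z / q) W q * Phi0 (Z / q) W q i j
        + al * (Kker (n - y1) (m - y1 - y2) i j (Z / q) W q * Phi0 (Z * q) (W / q) q (i - 1) j)
        + be * (Kker (n - y1) (m - y1 - y2) i j (Z / q) W q * Phi0 Z (W * q) q (i - 1) (j - 1)))).
    move=> i; rewrite zsum_shift eb; apply: zsum_ext => j.
    rewrite (@Kmain _ (z / q) w q n m y1 y2 y3 i j hQ) ?mulf_neq0 ?invr_neq0 // hZq /Phiy -/Z -/W -/D ei ej /Phi2 /c2 /al /be; ring.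
  rewrite (zsum_ext _ _ E) dsum_lin coreZ //; last 2 first.
  - by rewrite divfK.
  - by rewrite (_ : Z / q * W * q = Z * W) //; field.
  rewrite S1lem // S2lem //.
  have eu : u * z * q ^ (y1 - y2) = u * Z by rewrite /Z mulrA.
  have ev : v * w * q ^ (y2 - y3) = v * W by rewrite /W mulrA.
  rewrite eu ev /Phiy -/Z -/W -/D /Phi2 /c2 /al /be powdiv (expfzDr (y1 ^+ 2 + y1 * y2 + y2 ^+ 2) (- y1) hq0).
  ring.
Qed.
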